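(* Consider the self-attention dynamics with LayerNorm, $X^{(t+1)}=D^{(t)}A^{(t)}X^{(t)}W_V^{(t)}$, with initial input $X^{(0)}\in\mathbb{R}^{N\times d}$ whose rows have unit Euclidean norm. Let $\mathcal{G}$ be quasi-strongly connected with radius $r$ and assume \textbf{A1} and \textbf{A2}. If $W_V^{(t)}$ is orthogonal for all $t\ge0$ and $\phi^{(0)}\ge 0$, then there exist $C>0$ and $\epsilon>0$ with $N\epsilon<1$ such that $$\mu(X^{(t)})\le C\,(1-\epsilon^{2r})^{t/(2r)}\qquad\text{for all }t\ge0,$$ i.e. all tokens converge exponentially to a common point of $\mathbb{S}^{d-1}$.
   Context: Tokens are the rows of $X\in\mathbb{R}^{N\times d}$. Attention mask: directed graph $\mathcal{G}$ on $[N]$, with $(j,i)\in E(\mathcal{G})$ meaning token $i$ attends to token $j$; $\mathcal{N}_i=\{k:(k,i)\in E(\mathcal{G})\}$. Masked softmax: $\mathrm{softmax}_{\mathcal{G}}(R)_{ij}=\exp(R_{ij})/\sum_{k\in\mathcal{N}_i}\exp(R_{ik})$ if $(j,i)\in E(\mathcal{G})$, else $0$. $A^{(t)}=\mathrm{softmax}_{\mathcal{G}}\big(X^{(t)}W_Q^{(t)}(X^{(t)}W_K^{(t)})^\top/\sqrt{d_{QK}}\big)$ with fixed $d_{QK}>0$. $D^{(t)}=\mathrm{diag}(d_1,\dots,d_N)$, $d_i=1/\|(A^{(t)}X^{(t)}W_V^{(t)})_{i,:}\|_2$. \textbf{A1}: $(i,i)\in E(\mathcal{G})$ for all $i$. \textbf{A2}: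 $\sup_t\max\{\|W_Q^{(t)}\|_2,\|W_K^{(t)}\|_2\}<\infty$. $\mu(X)=\|X-\mathbf{1}\mathbf{1}^\top X/N\|_F$. $\phi^{(t)}=\min_{i,j\in[N]}\langle X^{(t)}_{i,:},X^{(t)}_{j,:}\rangle$. A center node is a node from which every node is reachable by a directed path; $\mathcal{G}$ is quasi-strongly connected if it has a center node; its radius is $\min_{c\text{ center}}\max_v\mathrm{dist}(c,v)$, where $\mathrm{dist}(u,v)$ is the length of a shortest directed path from $u$ to $v$. *)

(* Defs.v *)
From HB Require Import structures.
From mathcomp Require Import all_boot all_order all_algebra.
From mathcomp Require Import all_classical all_reals all_analysis.
Set Implicit Arguments. Unset Strict Implicit. Unset Printing Implicit Defensive.
Import Order.TTheory GRing.Theory Num.Theory.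
Local Open Scope ring_scope.
Local Open Scope classical_set_scope.

Section Defs.
Variable R : realType.

Definition vnorm n (v : 'rV[R]_n) : R := Num.sqrt (\sum_j v 0 j ^+ 2).

Definition opnorm2 m n (W : 'M[R]_(m, n)) : R :=
  sup [set vnorm (v *m W) | v in [set v : 'rV[R]_m | vnorm v = 1]].

(* Graph on [N]: E j i = true means (j,i) is an edge, i.e. token i attends to j. *)
Definition softmaxG N (E : rel 'I_N) (M : 'M[R]_N) : 'M[R]_N :=
  \matrix_(i, j) (if E j i then expR (M i j) / \sum_(k | E k i) expR (M i k)
                  else 0).

Definition attn N d dQK (E : rel 'I_N) (X : 'M[R]_(N, d))
  (WQ WK : 'M[R]_(d, dQK)) : 'M[R]_N :=
  softmaxG E ((Num.sqrt (dQK%:R))^-1 *: ((X *m WQ) *m (X *m WK)^T)).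

Definition sa_ln_step N d dQK (E : rel 'I_N) (X : 'M[R]_(N, d))
  (WQ WK : 'M[R]_(d, dQK)) (WV : 'M[R]_d) : 'M[R]_(N, d) :=
  let Y := attn E X WQ WK *m X *m WV in
  diag_mx (\row_i (vnorm (row i Y))^-1) *m Y.

Definition mu N d (X : 'M[R]_(N, d)) : R :=
  Num.sqrt (\sum_i \sum_j (X i j - (\sum_k X k j) / N%:R) ^+ 2).

Definition rowdot N d (X : 'M[R]_(N, d)) (i j : 'I_N) : R :=
  \sum_k X i k * X j k.

End Defs.

Definition walk N (E : rel 'I_N) (u v : 'I_N) (k : nat) : Prop :=
  exists p : seq 'I_N, size p = k /\ path E u p /\ last u p = v.
Definition reachable N (E : rel 'I_N) u v : Prop := exists k, walk E u v k.
Definition is_dist N (E : rel 'I_N) u v (k : nat) : Prop :=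
  walk E u v k /\ forall k', walk E u v k' -> (k <= k')%N.
Definition center N (E : rel 'I_N) c : Prop := forall v, reachable E c v.
Definition quasi_strongly_connected N (E : rel 'I_N) : Prop :=
  exists c, center E c.
Definition is_ecc N (E : rel 'I_N) c (e : nat) : Prop :=
  center E c /\ (forall v k, is_dist E c v k -> (k <= e)%N) /\
  exists v, is_dist E c v e.
Definition is_radius N (E : rel 'I_N) (r : nat) : Prop :=
  (exists c, is_ecc E c r) /\ forall c e, is_ecc E c e -> (r <= e)%N.

(* Main.v *)
Require Import Defs.
From HB Require Import structures.
From mathcomp Require Import all_boot all_order all_algebra.
From mathcomp Require Import all_classical all_reals all_analysis.
From mathcomp Require Import ring lra.
Import Order.TTheory GRing.Theory Num.Theory.
Set Implicit Arguments. Unset Strict Implicit. Unset Printing Implicit Defensive.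
Local Open Scope ring_scope.


Lemma vnorm_row (R : realType) N d (X : 'M[R]_(N,d)) i : vnorm (row i X) = Num.sqrt (rowdot X i i).
Proof. rewrite /vnorm /rowdot; congr Num.sqrt; apply eq_bigr => j _; by rewrite mxE expr2. Qed.

Lemma rowdotE (R : realType) N d (X : 'M[R]_(N,d)) i k : rowdot X i k = (X *m X^T) i k.
Proof. rewrite /rowdot mxE; apply eq_bigr => j _; by rewrite mxE. Qed.

Lemma rowdot_ge0 (R : realType) N d (X : 'M[R]_(N,d)) i : 0 <= rowdot X i i.
Proof. by apply: sumr_ge0 => j _; rewrite -expr2 sqr_ge0. Qed.

Lemma dot2 (R : realType) n (p q : 'I_n -> R) :
  2 * `|\sum_j p j * q j| <= \sum_j p j * p j + \sum_j q j * q j.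
Proof.
have h1 : 0 <= \sum_j (p j - q j) ^+ 2 by apply: sumr_ge0 => j _; apply: sqr_ge0.
have h2 : 0 <= \sum_j (p j + q j) ^+ 2 by apply: sumr_ge0 => j _; apply: sqr_ge0.
have e1 : \sum_j (p j - q j) ^+ 2 = \sum_j p j * p j + \sum_j q j * q j - 2 * \sum_j p j * q j.
  rewrite mulr_sumr -big_split -sumrB; apply: eq_bigr => j _ /=; ring.
have e2 : \sum_j (p j + q j) ^+ 2 = \sum_j p j * p j + \sum_j q j * q j + 2 * \sum_j p j * q j.
  rewrite mulr_sumr -!big_split; apply: eq_bigr => j _ /=; ring.
rewrite e1 in h1; rewrite e2 in h2.
have : `|\sum_j p j * q j| <= (\sum_j p j * p j + \sum_j q j * q j) / 2.
  rewrite ler_norml; apply/andP; split; lra.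
lra.
Qed.

Lemma rowdot_le1 (R : realType) N d (X : 'M[R]_(N,d)) i k :
  rowdot X i i = 1 -> rowdot X k k = 1 -> rowdot X i k <= 1.
Proof.
move=> hi hk; have := dot2 (fun j => X i j) (fun j => X k j).
rewrite -/(rowdot X i k) -/(rowdot X i i) -/(rowdot X k k) hi hk => h.
have := ler_norm (rowdot X i k); lra.
Qed.

Lemma term_le (R : realType) (I : finType) (F : I -> R) j0 : (forall j, 0 <= F j) -> F j0 <= \sum_j F j.
Proof.
move=> h; rewrite (bigD1 j0) //=; rewrite lerDl; apply: sumr_ge0 => j _; exact: h.
Qed.




Lemma softmax_props (R : realType) N (E : rel 'I_N) (M : 'M[R]_N) B :
  (forall i, E i i) -> (forall i j, `|M i j| <= B) ->
  (forall i j, 0 <= softmaxG E M i j) /\ (forall i, \sum_j softmaxG E M i j = 1) /\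
  (forall i j, E j i -> expR (- (B + B)) / N%:R <= softmaxG E M i j).
Proof.
move=> Ei hB.
have Zpos : forall i, 0 < \sum_(k | E k i) expR (M i k).
  move=> i; rewrite (bigD1 i) //=; apply: ltr_pwDl; first exact: expR_gt0.
  by apply: sumr_ge0 => k _; apply: expR_ge0.
split; first by move=> i j; rewrite mxE; case: (E j i) => //; apply: divr_ge0; [apply: expR_ge0 | apply: ltW].
split.
  move=> i; rewrite (eq_bigr (fun j => if E j i then expR (M i j) / \sum_(k | E k i) expR (M i k) else 0)); last by move=> j _; rewrite mxE.
  rewrite -big_mkcond /= -mulr_suml divff //; exact: lt0r_neq0.
move=> i j Eji; rewrite mxE Eji.
have Zle : \sum_(k | E k i) expR (M i k) <= N%:R * expR B.
  apply: (le_trans (y := \sum_(k | E k i) expR B)).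
    apply: ler_sum => k _; rewrite ler_expR; have := hB i k; rewrite ler_norml => /andP[_ ->] //.
  rewrite sumr_const -[_ *+ _]mulr_natl; apply: ler_wpM2r; first exact: expR_ge0; rewrite ler_nat.
  apply: (leq_trans (max_card _)); by rewrite card_ord.
have ej : expR (- B) <= expR (M i j).
  rewrite ler_expR; have := hB i j; rewrite ler_norml => /andP[-> _] //.
have Npos : (0 < N)%N by case: N i {E M hB Ei Zpos Zle ej Eji j} => //= -[].
have Npos' : (0 : R) < N%:R by rewrite ltr0n.
set Z := \sum_(k | E k i) _ in Zle Zpos *.
rewrite opprD expRD ler_pdivlMr //.
apply: (le_trans (y := expR (-B) * expR (-B) / N%:R * (N%:R * expR B))).
  apply: ler_wpM2l => //.
have -> : expR (-B) * expR (-B) / N%:R * (N%:R * expR B) = expR (- B).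
  rewrite expRN; field; apply/andP; split; [exact: lt0r_neq0 (expR_gt0 B) | exact: lt0r_neq0].
  exact: ej.
exact: Zpos.
Qed.



Lemma step_gram (R : realType) N d (A : 'M[R]_N) (X : 'M[R]_(N,d)) (W : 'M[R]_d) :
 W *m W^T = 1%:M ->
 (forall i j, 0 <= A i j) -> (forall i, \sum_j A i j = 1) -> (forall i, 0 < A i i) ->
 (forall i, rowdot X i i = 1) -> (forall i k, 0 <= rowdot X i k) ->
 let Y := A *m X *m W in
 let X' := diag_mx (\row_i (vnorm (row i Y))^-1) *m Y in
 (forall i, rowdot X' i i = 1) /\ (forall i k, 0 <= rowdot X' i k) /\
 (forall i k, 1 - rowdot X' i k <= \sum_j \sum_l A i j * A k l * (1 - rowdot X j l)).
Proof.
move=> HW A0 A1 Aii G1 G0 Y X'.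
have HY : forall i k, rowdot Y i k = \sum_j \sum_l A i j * A k l * rowdot X j l.
  move=> i k; rewrite rowdotE.
  have -> : Y *m Y^T = A *m (X *m X^T) *m A^T.
    by rewrite /Y !trmx_mul !mulmxA -(mulmxA (A *m X) W) HW mulmx1.
  rewrite mxE (eq_bigr (fun l => \sum_j A i j * A k l * rowdot X j l)); first by rewrite exchange_big.
  move=> l _; rewrite [A^T l k]mxE [(A *m _) i l]mxE mulr_suml; apply: eq_bigr => j _.
  rewrite rowdotE; ring.
have G1' : forall j l, rowdot X j l <= 1 by move=> j l; apply: rowdot_le1.
have AA1 : forall i k, \sum_j \sum_l A i j * A k l = 1.
  move=> i k; rewrite -[RHS]mul1r -{1}(A1 i) -(A1 k) mulr_suml; apply: eq_bigr => j _.
  by rewrite mulr_sumr.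
have Hge0 : forall i k, 0 <= rowdot Y i k.
  move=> i k; rewrite HY; apply: sumr_ge0 => j _; apply: sumr_ge0 => l _.
  by rewrite !mulr_ge0.
have Hgt0 : forall i, 0 < rowdot Y i i.
  move=> i; apply: (lt_le_trans (y := A i i * A i i * rowdot X i i)).
    by rewrite G1 mulr1 mulr_gt0.
  rewrite HY; apply: (le_trans (y := \sum_l A i i * A i l * rowdot X i l)).
    apply: (term_le (F := fun l => A i i * A i l * rowdot X i l)) => l; by rewrite !mulr_ge0.
  apply: (term_le (F := fun j => \sum_l A i j * A i l * rowdot X j l)) => j.
  apply: sumr_ge0 => l _; by rewrite !mulr_ge0.
have Hle1 : forall i, rowdot Y i i <= 1.
  move=> i; rewrite HY -(AA1 i i); apply: ler_sum => j _; apply: ler_sum => l _.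
  rewrite -[X in _ <= X]mulr1; apply: ler_wpM2l; [by rewrite mulr_ge0 | exact: G1'].
have HX' : forall i k, rowdot X' i k =
    (Num.sqrt (rowdot Y i i))^-1 * (Num.sqrt (rowdot Y k k))^-1 * rowdot Y i k.
  move=> i k; rewrite /rowdot /X' mul_diag_mx mulr_sumr; apply: eq_bigr => j _.
  rewrite !mxE -!vnorm_row; ring.
have sq : forall i, 0 < Num.sqrt (rowdot Y i i) /\ Num.sqrt (rowdot Y i i) <= 1.
  move=> i; split; first by rewrite sqrtr_gt0.
  by rewrite -sqrtr1 ler_wsqrtr.
split.
  move=> i; rewrite HX' -{3}(sqr_sqrtr (ltW (Hgt0 i))) expr2.
  have := (sq i).1 => h; field; exact: lt0r_neq0.
split.
  move=> i k; rewrite HX'; apply: mulr_ge0; last exact: Hge0.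
  by apply: mulr_ge0; rewrite invr_ge0 ltW // (sq _).1.
move=> i k.
have -> : \sum_j \sum_l A i j * A k l * (1 - rowdot X j l) = \sum_j \sum_l A i j * A k l - rowdot Y i k.
  rewrite HY -sumrB; apply: eq_bigr => j _; rewrite -sumrB; apply: eq_bigr => l _; ring.
rewrite AA1.
rewrite lerD2l lerN2 HX'.
have [si1 si2] := sq i; have [sk1 sk2] := sq k.
rewrite -[X in X <= _]mul1r; apply: ler_wpM2r; first exact: Hge0.
rewrite -invfM invf_ge1 ?mulr_gt0 //.
by rewrite -[1]mulr1 ler_pM // ltW.
Qed.


Definition contr_hyps (R : realType) N (E : rel 'I_N) (S : nat -> 'I_N -> 'I_N -> R)
  (A : nat -> 'M[R]_N) (eps : R) : Prop :=
  [/\ (forall t i k, 0 <= S t i k), (forall t i, S t i i = 0),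
      (forall t i k, S t.+1 i k <= \sum_j \sum_l A t i j * A t k l * S t j l),
      (forall t i j, 0 <= A t i j) /\ (forall t i, \sum_j A t i j = 1)
    & (forall t i j, E j i -> eps <= A t i j) /\ 0 <= eps].

Lemma AA1 (R : realType) N (A : 'M[R]_N) i k : (forall i, \sum_j A i j = 1) ->
  \sum_j \sum_l A i j * A k l = 1.
Proof.
move=> A1; rewrite -[RHS]mul1r -{1}(A1 i) -(A1 k) mulr_suml; apply: eq_bigr => j _.
by rewrite mulr_sumr.
Qed.

Lemma contr_mono (R : realType) N (E : rel 'I_N) S A (eps : R) :
  contr_hyps E S A eps -> forall D t0, (forall i k, S t0 i k <= D) ->
  forall m i k, S (t0 + m)%N i k <= D.
Proof.
case=> S0 Sd St [A0 A1] _ D t0 HD m; elim: m => [|m IH] i k; first by rewrite addn0.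
rewrite addnS; apply: (le_trans (St _ i k)).
apply: (le_trans (y := \sum_j \sum_l A (t0 + m)%N i j * A (t0 + m)%N k l * D)).
  apply: ler_sum => j _; apply: ler_sum => l _; apply: ler_wpM2l; last exact: IH.
  by rewrite mulr_ge0.
rewrite -[X in _ <= X]mul1r -(AA1 i k (A1 (t0 + m)%N)) mulr_suml; apply: ler_sum => j _.
by rewrite mulr_suml.
Qed.

Lemma walk0 N (E : rel 'I_N) c v : walk E c v 0 -> v = c.
Proof. by case=> -[|? ?] [] //= _ [_ <-]. Qed.

Lemma walkS N (E : rel 'I_N) c v m : walk E c v m.+1 -> exists2 j, walk E c j m & E j v.
Proof.
case=> p [sp [pp lp]]; case/lastP: p sp pp lp => [|p x] //.
rewrite size_rcons => -[sp]; rewrite rcons_path last_rcons => /andP[pp e] lx.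
exists (last c p); first by exists p.
by rewrite -lx.
Qed.

Lemma contr_walk (R : realType) N (E : rel 'I_N) S A (eps : R) c :
  contr_hyps E S A eps -> forall D t0, (forall i k, S t0 i k <= D) ->
  forall m i k, walk E c i m -> walk E c k m ->
  S (t0 + m)%N i k <= (1 - eps ^+ (2 * m)) * D.
Proof.
move=> H; have Hm := contr_mono H; case: H => S0 Sd St [A0 A1] [Ae e0].
move=> D t0 HD m; elim: m => [|m IH] i k wi wk.
  by rewrite (walk0 wi) (walk0 wk) addn0 Sd muln0 expr0 subrr mul0r.
have [j wj Eji] := walkS wi; have [l wl Elk] := walkS wk.
have D0 : 0 <= D by apply: le_trans (HD i i); exact: S0.
set t := (t0 + m)%N.
have HDt : forall a b, S t a b <= D by move=> a b; apply: (contr_mono (And5 S0 Sd St (conj A0 A1) (conj Ae e0))).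
rewrite addnS; apply: (le_trans (St _ i k)); rewrite -/t.
have eq1 : \sum_j0 \sum_l0 A t i j0 * A t k l0 * S t j0 l0 =
   D - \sum_j0 \sum_l0 A t i j0 * A t k l0 * (D - S t j0 l0).
  rewrite -[X in X - _]mul1r -(AA1 i k (A1 t)) mulr_suml -sumrB; apply: eq_bigr => a _.
  rewrite mulr_suml -sumrB; apply: eq_bigr => b _; ring.
rewrite eq1.
have term : A t i j * A t k l * (D - S t j l) <=
    \sum_j0 \sum_l0 A t i j0 * A t k l0 * (D - S t j0 l0).
  apply: (le_trans (y := \sum_l0 A t i j * A t k l0 * (D - S t j l0))).
    apply: (term_le (F := fun l0 => A t i j * A t k l0 * (D - S t j l0))) => b.
    by rewrite !mulr_ge0 // subr_ge0.
  apply: (term_le (F := fun j0 => \sum_l0 A t i j0 * A t k l0 * (D - S t j0 l0))) => a.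
  by apply: sumr_ge0 => b _; rewrite !mulr_ge0 // subr_ge0.
have Sjl := IH j l wj wl.
have aij := Ae t i j Eji; have akl := Ae t k l Elk.
have pe : eps * eps <= A t i j * A t k l by apply: ler_pM.
have q0 : 0 <= eps ^+ (2 * m) by apply: exprn_ge0.
have : eps ^+ (2 * m) * D <= D - S t j l by lra.
move=> h2.
have : eps * eps * (eps ^+ (2 * m) * D) <= A t i j * A t k l * (D - S t j l).
  apply: ler_pM => //; [by rewrite mulr_ge0 | by rewrite mulr_ge0].
have -> : eps ^+ (2 * m.+1) = eps * eps * eps ^+ (2 * m).
  by rewrite mulnS !exprS mulrA.
lra.
Qed.


Lemma walk_ext N (E : rel 'I_N) c v k n : E v v -> walk E c v k -> walk E c v (k + n).
Proof.
move=> Evv wk; elim: n => [|n IH]; first by rewrite addn0.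
case: IH => p [sp [pp lp]]; exists (rcons p v); split; first by rewrite size_rcons sp addnS.
by rewrite rcons_path pp lp Evv last_rcons.
Qed.

Lemma radius_walks N (E : rel 'I_N) r : (forall i, E i i) -> is_radius E r ->
  exists c, forall v, walk E c v r.
Proof.
move=> Eii [[c [cen [hle _]]] _]; exists c => v.
have [k wk] := cen v.
pose P := fun k => `[< walk E c v k >].
have exP : exists k, P k by exists k; apply/asboolP.
case: (ex_minnP exP) => m /asboolP wm minm.
have dist : is_dist E c v m by split => // k' wk'; apply: minm; apply/asboolP.
have mr := hle v m dist.
by rewrite -(subnKC mr); apply: walk_ext.
Qed.

Lemma contr_all (R : realType) N (E : rel 'I_N) S A (eps : R) r :
  contr_hyps E S A eps -> (forall i, E i i) -> is_radius E r ->
  (forall i k, S 0%N i k <= 1) ->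
  forall t i k, S t i k <= (1 - eps ^+ (2 * r)) ^+ (t %/ r).
Proof.
move=> H Eii Hr S01.
have [c wc] := radius_walks Eii Hr.
have Hper : forall D t0, (forall i k, S t0 i k <= D) -> forall i k,
    S (t0 + r)%N i k <= (1 - eps ^+ (2 * r)) * D.
  by move=> D t0 HD i k; apply: (contr_walk H HD).
have Hn : forall n i k, S (n * r)%N i k <= (1 - eps ^+ (2 * r)) ^+ n.
  elim=> [|n IH] i k; first by rewrite mul0n expr0.
  by rewrite mulSn addnC exprS; apply: Hper.
move=> t i k; rewrite {1}(divn_eq t r).
by apply: (contr_mono H (Hn (t %/ r)%N)).
Qed.


Lemma var_eq (R : realType) N (x : 'I_N -> R) : (0 < N)%N ->
  \sum_i (x i - (\sum_k x k) / N%:R) ^+ 2 =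
  \sum_i x i * x i - (\sum_i \sum_k x i * x k) / N%:R.
Proof.
move=> N0; have Nn : (N%:R : R) != 0 by rewrite pnatr_eq0 -lt0n.
set s := \sum_k x k.
have -> : \sum_i \sum_k x i * x k = s * s.
  by rewrite mulr_suml; apply: eq_bigr => i _; rewrite mulr_sumr.
rewrite (eq_bigr (fun i => x i * x i - (2 * s / N%:R) * x i + s ^+ 2 / N%:R ^+ 2)); last first.
  by move=> i _; field; rewrite ?Nn.
rewrite big_split sumrB /= -mulr_sumr sumr_const card_ord -/s.
rewrite -[_ *+ N]mulr_natr; field; rewrite ?Nn //.
Qed.

Lemma mu_bound (R : realType) N d (X : 'M[R]_(N,d)) D : (0 < N)%N ->
  (forall i, rowdot X i i = 1) -> (forall i k, 1 - rowdot X i k <= D) ->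
  mu X <= Num.sqrt (N%:R * D).
Proof.
move=> N0 G1 HD; have Np : (0 : R) < N%:R by rewrite ltr0n.
rewrite /mu; apply: ler_wsqrtr.
rewrite exchange_big /=.
rewrite (eq_bigr (fun j => \sum_i X i j * X i j - (\sum_i \sum_k X i j * X k j) / N%:R)); last first.
  by move=> j _; apply: var_eq.
rewrite sumrB -mulr_suml.
have -> : \sum_j \sum_i X i j * X i j = \sum_i rowdot X i i.
  by rewrite exchange_big.
have -> : \sum_j \sum_i \sum_k X i j * X k j = \sum_i \sum_k rowdot X i k.
  rewrite exchange_big; apply: eq_bigr => i _; rewrite exchange_big //.
rewrite (eq_bigr (fun _ => 1)) // sumr_const card_ord.
set S := \sum_i \sum_k rowdot X i k.
have e1 : \sum_(i < N) \sum_(k < N) (1 - rowdot X i k) = N%:R * N%:R - S.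
  rewrite (eq_bigr (fun i => N%:R - \sum_k rowdot X i k)); last first.
    by move=> i _; rewrite sumrB sumr_const card_ord.
  by rewrite sumrB sumr_const card_ord mulr_natr.
have e2 : \sum_(i < N) \sum_(k < N) D = N%:R * (N%:R * D).
  by rewrite (eq_bigr (fun _ => N%:R * D)) ?sumr_const ?card_ord ?mulr_natl // => i _; rewrite sumr_const card_ord mulr_natl.
have : \sum_(i < N) \sum_(k < N) (1 - rowdot X i k) <= \sum_(i < N) \sum_(k < N) D.
  by apply: ler_sum => i _; apply: ler_sum => k _; apply: HD.
rewrite e1 e2 => h.
have -> : N%:R - S / N%:R = (N%:R * N%:R - S) / N%:R by field; exact: lt0r_neq0.
rewrite ler_pdivrMr //; nra.
Qed.


Lemma sqrt_eq1 (R : realType) (x : R) : Num.sqrt x = 1 -> x = 1.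
Proof.
move=> h; have [x0|x0] := leP 0 x.
  by rewrite -(sqr_sqrtr x0) h expr1n.
by move: h; rewrite ltr0_sqrtr // => /eqP; rewrite eq_sym oner_eq0.
Qed.

Lemma opnorm_ge (R : realType) m n (W : 'M[R]_(m,n)) (v : 'rV_m) :
  vnorm v = 1 -> vnorm (v *m W) <= opnorm2 W.
Proof.
move=> hv; apply: sup_upper_bound; last by exists v.
split; first by exists (vnorm (v *m W)); exists v.
exists (Num.sqrt (\sum_j (\sum_i `|W i j|) ^+ 2)).
move=> y [u /= hu <-]; rewrite /vnorm; apply: ler_wsqrtr; apply: ler_sum => j _.
have hs : \sum_k u 0 k ^+ 2 = 1 by apply: sqrt_eq1.
have ui : forall i, `|u 0 i| <= 1.
  move=> i; have : u 0 i ^+ 2 <= 1.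
    by rewrite -hs; apply: (term_le (F := fun k => u 0 k ^+ 2)) => k; apply: sqr_ge0.
  by move=> h; rewrite ler_norml; apply/andP; split; nra.
have hj : `|(u *m W) 0 j| <= \sum_i `|W i j|.
  rewrite mxE; apply: (le_trans (ler_norm_sum _ _ _)); apply: ler_sum => i _.
  rewrite normrM -[X in _ <= X]mul1r; apply: ler_wpM2r => //.
have n0 := normr_ge0 ((u *m W) 0 j).
rewrite -real_normK ?num_real // !expr2; nra.
Qed.

Lemma att_bound (R : realType) N d dQK (X : 'M[R]_(N,d)) (WQ WK : 'M[R]_(d,dQK)) M :
  (forall i, rowdot X i i = 1) -> opnorm2 WQ <= M -> opnorm2 WK <= M ->
  forall i j, `|((Num.sqrt (dQK%:R))^-1 *: ((X *m WQ) *m (X *m WK)^T)) i j|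
     <= (Num.sqrt (dQK%:R))^-1 * (M * M).
Proof.
move=> G1 hQ hK.
have rb : forall (W : 'M[R]_(d,dQK)) i, opnorm2 W <= M -> rowdot (X *m W) i i <= M * M.
  move=> W i hW.
  have h1 : vnorm (row i (X *m W)) <= M.
    rewrite row_mul; apply: le_trans hW; apply: opnorm_ge.
    by rewrite vnorm_row G1 sqrtr1.
  rewrite vnorm_row in h1.
  have h0 := sqrtr_ge0 (rowdot (X *m W) i i).
  rewrite -(sqr_sqrtr (rowdot_ge0 _ i)); nra.
move=> i j; rewrite !mxE normrM ger0_norm ?invr_ge0 ?sqrtr_ge0 //.
apply: ler_wpM2l; first by rewrite invr_ge0 sqrtr_ge0.
rewrite (eq_bigr (fun l => (X *m WQ) i l * (X *m WK) j l)); last by move=> l _; rewrite [_^T _ _]mxE.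
have := dot2 (fun l => (X *m WQ) i l) (fun l => (X *m WK) j l).
rewrite -/(rowdot (X *m WQ) i i) -/(rowdot (X *m WK) j j).
have := rb WQ i hQ; have := rb WK j hK.
lra.
Qed.


Lemma final_arith (R : realType) (N : nat) (q : R) (r t : nat) :
  0 < q -> q < 1 -> (0 < r)%N -> (0 < N)%N ->
  Num.sqrt (N%:R * q ^+ (t %/ r)) <=
  Num.sqrt (N%:R / q) * powR q (t%:R / (2 * r)%:R).
Proof.
move=> q0 q1 r0 N0.
have Np : (0 : R) < N%:R by rewrite ltr0n.
set n := (t %/ r)%N.
set y := powR q _.
have y0 : 0 <= y by apply: powR_ge0.
have yy : y ^+ 2 = expR (t%:R / r%:R * ln q).
  rewrite /y /powR (negbTE (lt0r_neq0 q0)) -expRM_natl; congr expR.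
  rewrite natrM; field; rewrite pnatr_eq0 -lt0n r0 //.
have qn : q ^+ n.+1 = expR (n.+1%:R * ln q).
  by rewrite -[LHS](lnK (x := q ^+ n.+1)) ?lnXn // ?mulr_natl // posrE exprn_gt0.
have key : q ^+ n.+1 <= y ^+ 2.
  rewrite qn yy ler_expR; apply: ler_wnM2r; first by apply: ln_le0; exact: ltW.
  have rp : (0 : R) < r%:R by rewrite ltr0n.
  rewrite ler_pdivrMr // -natrM ler_nat; apply: ltnW.
rewrite /n; exact: ltn_ceil.
rewrite -[y]ger0_norm // -sqrtr_sqr -sqrtrM; last by apply: divr_ge0 => //; exact: ltW.
apply: ler_wsqrtr.
apply: (le_trans (y := N%:R / q * q ^+ n.+1)).
  rewrite exprS mulrA divfK ?lt0r_neq0 //.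
apply: ler_wpM2l => //; apply: divr_ge0 => //; exact: ltW.
Qed.


Theorem corollary1 (R : realType) (N d dQK : nat) (E : rel 'I_N) (r : nat)
  (WQ WK : nat -> 'M[R]_(d, dQK)) (WV : nat -> 'M[R]_d)
  (X : nat -> 'M[R]_(N, d)) :
  (0 < dQK)%N ->
  (* initial rows on the unit sphere *)
  (forall i, vnorm (row i (X 0%N)) = 1) ->
  (* dynamics *)
  (forall t, X t.+1 = sa_ln_step E (X t) (WQ t) (WK t) (WV t)) ->
  quasi_strongly_connected E -> is_radius E r ->
  (* A1 *) (forall i, E i i) ->
  (* A2 *) (exists M : R, forall t, opnorm2 (WQ t) <= M /\ opnorm2 (WK t) <= M) ->
  (* W_V orthogonal *) (forall t, WV t *m (WV t)^T = 1%:M) ->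
  (* phi^(0) >= 0 *) (forall i j, 0 <= rowdot (X 0%N) i j) ->
  exists C eps : R, 0 < C /\ 0 < eps /\ N%:R * eps < 1 /\
    forall t : nat, mu (X t) <= C * powR (1 - eps ^+ (2 * r)) (t%:R / (2 * r)%:R).
Proof.
move=> dQK0 X0 Xstep _ Hr Eii [M HM] HWV Hphi.
have N0 : (0 < N)%N by case: Hr => -[c _] _; exact: (leq_ltn_trans (leq0n c) (ltn_ord c)).
have Np : (0 : R) < N%:R by rewrite ltr0n.
pose B := (Num.sqrt (dQK%:R))^-1 * (M * M).
pose d0 := expR (- (B + B)) / N%:R.
pose eps := d0 / 2.
have d0p : 0 < d0 by apply: divr_gt0 => //; exact: expR_gt0.
have epsp : 0 < eps by apply: divr_gt0.
have epsd : eps <= d0 by rewrite /eps ler_pdivrMr //; lra.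
have Neps : N%:R * eps < 1.
  rewrite /eps /d0 mulrA mulrCA divff ?lt0r_neq0 // mulr1.
  have : expR (- (B + B)) <= 1.
    rewrite -expR0 ler_expR; have : 0 <= B.
      by rewrite /B mulr_ge0 ?invr_ge0 ?sqrtr_ge0 // -expr2 sqr_ge0.
    lra.
  lra.
pose A t := attn E (X t) (WQ t) (WK t).
pose Inv t := (forall i, rowdot (X t) i i = 1) /\ (forall i k, 0 <= rowdot (X t) i k).
have Aprops : forall t, Inv t -> (forall i j, 0 <= A t i j) /\ (forall i, \sum_j A t i j = 1) /\
    (forall i j, E j i -> d0 <= A t i j).
  move=> t [G1 _]; have [hQ hK] := HM t.
  exact: (softmax_props Eii (att_bound G1 hQ hK)).
have Step : forall t, Inv t -> Inv t.+1 /\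
    (forall i k, 1 - rowdot (X t.+1) i k <= \sum_j \sum_l A t i j * A t k l * (1 - rowdot (X t) j l)).
  move=> t It; have [A0 [A1 Ad]] := Aprops t It; have [G1 G0] := It.
  have Aii : forall i, 0 < A t i i by move=> i; apply: lt_le_trans d0p (Ad i i (Eii i)).
  have := step_gram (HWV t) A0 A1 Aii G1 G0.
  rewrite /Inv Xstep /sa_ln_step /= => -[h1 [h2 h3]]; split; [by split | exact: h3].
have Inv_all : forall t, Inv t.
  elim=> [|t IH]; last exact: (Step t IH).1.
  split; last exact: Hphi.
  by move=> i; apply: sqrt_eq1; rewrite -vnorm_row.
pose S t i k := 1 - rowdot (X t) i k.
have CH : contr_hyps E S A eps.
  split.
  - move=> t i k; rewrite /S subr_ge0; apply: rowdot_le1; apply: (Inv_all t).1.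
  - by move=> t i; rewrite /S (Inv_all t).1 subrr.
  - move=> t i k; exact: ((Step t (Inv_all t)).2 i k).
  - split=> t; have := Aprops t (Inv_all t); case=> [a [b _]]; [exact: a | exact: b].
  - split; last exact: ltW.
    move=> t i j Eji; apply: le_trans epsd _; exact: ((Aprops t (Inv_all t)).2.2 i j Eji).
have S1 : forall t i k, S t i k <= 1.
  by move=> t i k; rewrite /S lerBlDr lerDl; apply: (Inv_all t).2.
case: (posnP r) => [r0|rpos].
  have [c wc] := radius_walks Eii Hr.
  exists 1, eps; split=> //; split=> //; split=> // t.
  rewrite mul1r; apply: le_trans (powR_ge0 _ _).
  have Hb : forall i k, S t i k <= 0.
    move=> i k; rewrite r0 in wc.
    have := contr_walk (c := c) CH (S1 t) (wc i) (wc k).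
    by rewrite addn0 muln0 expr0 subrr mul0r.
  apply: (le_trans (mu_bound N0 (Inv_all t).1 Hb)).
  by rewrite mulr0 sqrtr0.
set q := 1 - eps ^+ (2 * r).
have q0 : 0 < q.
  have e1 : eps < 1.
    have : N%:R * eps < 1 := Neps; have : 1 <= N%:R :> R by rewrite ler1n.
    nra.
  rewrite /q subr_gt0 expr_lt1 ?muln_gt0 ?rpos //; exact: ltW.
have q1 : q < 1.
  rewrite /q ltrBlDr ltrDl; apply: exprn_gt0 => //.
exists (Num.sqrt (N%:R / q)), eps; split.
  by rewrite sqrtr_gt0 divr_gt0.
split=> //; split=> // t.
have Hb := contr_all CH Eii Hr (S1 0%N) t.
apply: (le_trans (mu_bound N0 (Inv_all t).1 Hb)).
exact: final_arith.
Qed.
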